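(* Writing $\mathcal{E}=2\mathbb{Z}$, $\mathcal{O}=2\mathbb{Z}+1$, define subsets of $\mathbb{Z}^4$ (elements $(a,b,c,d)$): $X_1=\{b\in\mathcal{O},\ c\in2\mathcal{O},\ d\in4\mathcal{E}\}$, $X_2=\{b\in\mathcal{O},\ c\in2\mathcal{O},\ d\in4\mathcal{O}\}$, $X_3=\{a\in\mathcal{O},\ b,c\in\mathcal{E},\ d\in2\mathcal{O}\}$, $X_1'=\{c\in\mathcal{O},\ b\in2\mathcal{O},\ a\in4\mathcal{E}\}$, $X_1''=\{b+c\in\mathcal{O},\ a+c\in2\mathcal{E},\ a+b+c+d\in4\mathcal{E}\}$, $X_2'=\{c\in\mathcal{O},\ b\in2\mathcal{O},\ a\in4\mathcal{O}\}$, $X_2''=\{b+c\in\mathcal{O},\ a+c\in2\mathcal{E},\ a+b+c+d\in4\mathcal{O}\}$, $X_3'=\{d\in\mathcal{O},\ b,c\in\mathcal{E},\ a\in2\mathcal{O}\}$, $X_3''=\{a,b,c,d\in\mathcal{O},\ a+b+c+d\in2\mathcal{O}\}$. Then $\{x\in\mathbb{Z}^4: P(x)\equiv4\pmod{32}\}=X_1\sqcup X_1'\sqcup X_1''$ and $\{x\in\mathbb{Z}^4: P(x)\equiv20\pmod{32}\}=X_2\sqcup X_2'\sqcup X_2''\sqcup X_3\sqcup X_3'\sqcup X_3''$ (disjoint unions).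
   Context: For $x=(a,b,c,d)\in\mathbb{Z}^4$, $P(x)=b^2c^2+18abcd-4ac^3-4b^3d-27a^2d^2$ (discriminant of the binary cubic form $au^3+bu^2v+cuv^2+dv^3$). For a set $S\subset\mathbb{Z}$ and $k\in\mathbb{Z}$, $kS=\{ks: s\in S\}$. *)

(* Defs.v *)
From Stdlib Require Import ZArith List.
Import ListNotations.
Open Scope Z_scope.

Definition Z4 : Type := (Z * Z * Z * Z)%type.

(* discriminant of the binary cubic form a u^3 + b u^2 v + c u v^2 + d v^3 *)
Definition P (x : Z4) : Z :=
  let '(a, b, c, d) := x in
  b^2*c^2 + 18*a*b*c*d - 4*a*c^3 - 4*b^3*d - 27*a^2*d^2.

Definition Ev (s : Z) : Prop := exists t, s = 2*t.
Definition Od (s : Z) : Prop := exists t, s = 2*t + 1.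
Definition scal (k : Z) (S : Z -> Prop) (x : Z) : Prop := exists s, S s /\ x = k*s.

Definition X1 (x : Z4) : Prop := let '(a,b,c,d) := x in
  Od b /\ scal 2 Od c /\ scal 4 Ev d.
Definition X2 (x : Z4) : Prop := let '(a,b,c,d) := x in
  Od b /\ scal 2 Od c /\ scal 4 Od d.
Definition X3 (x : Z4) : Prop := let '(a,b,c,d) := x in
  Od a /\ Ev b /\ Ev c /\ scal 2 Od d.
Definition X1' (x : Z4) : Prop := let '(a,b,c,d) := x in
  Od c /\ scal 2 Od b /\ scal 4 Ev a.
Definition X1'' (x : Z4) : Prop := let '(a,b,c,d) := x in
  Od (b+c) /\ scal 2 Ev (a+c) /\ scal 4 Ev (a+b+c+d).
Definition X2' (x : Z4) : Prop := let '(a,b,c,d) := x in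
  Od c /\ scal 2 Od b /\ scal 4 Od a.
Definition X2'' (x : Z4) : Prop := let '(a,b,c,d) := x in
  Od (b+c) /\ scal 2 Ev (a+c) /\ scal 4 Od (a+b+c+d).
Definition X3' (x : Z4) : Prop := let '(a,b,c,d) := x in
  Od d /\ Ev b /\ Ev c /\ scal 2 Od a.
Definition X3'' (x : Z4) : Prop := let '(a,b,c,d) := x in
  Od a /\ Od b /\ Od c /\ Od d /\ scal 2 Od (a+b+c+d).

Definition disjoint_union (S : Z4 -> Prop) (L : list (Z4 -> Prop)) : Prop :=
  (forall x, S x <-> Exists (fun X => X x) L) /\
  ForallOrdPairs (fun X Y => forall x, ~ (X x /\ Y x)) L.

(* Main.v *)
Require Import Defs.
From Stdlib Require Import ZArith List Lia Bool.
Import ListNotations.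
Open Scope Z_scope.

Definition ob s := s mod 2 =? 1.
Definition eb s := s mod 2 =? 0.
Definition s2o s := s mod 4 =? 2.
Definition s2e s := s mod 4 =? 0.
Definition s4e s := s mod 8 =? 0.
Definition s4o s := s mod 8 =? 4.

Lemma Od_b s : Od s <-> ob s = true.
Proof. unfold Od, ob; rewrite Z.eqb_eq; split; [intros [t ->]; Z.div_mod_to_equations; lia| intros; exists (s/2); Z.div_mod_to_equations; lia]. Qed.
Lemma Ev_b s : Ev s <-> eb s = true.
Proof. unfold Ev, eb; rewrite Z.eqb_eq; split; [intros [t ->]; Z.div_mod_to_equations; lia| intros; exists (s/2); Z.div_mod_to_equations; lia]. Qed.
Lemma s2o_b s : scal 2 Od s <-> s2o s = true.
Proof. unfold scal, Od, s2o; rewrite Z.eqb_eq; split;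
  [intros [t [[u ->] ->]]; Z.div_mod_to_equations; lia| intros; exists (s/2); split; [exists (s/4)|]; Z.div_mod_to_equations; lia]. Qed.
Lemma s2e_b s : scal 2 Ev s <-> s2e s = true.
Proof. unfold scal, Ev, s2e; rewrite Z.eqb_eq; split;
  [intros [t [[u ->] ->]]; Z.div_mod_to_equations; lia| intros; exists (s/2); split; [exists (s/4)|]; Z.div_mod_to_equations; lia]. Qed.
Lemma s4e_b s : scal 4 Ev s <-> s4e s = true.
Proof. unfold scal, Ev, s4e; rewrite Z.eqb_eq; split;
  [intros [t [[u ->] ->]]; Z.div_mod_to_equations; lia| intros; exists (s/4); split; [exists (s/8)|]; Z.div_mod_to_equations; lia]. Qed.
Lemma s4o_b s : scal 4 Od s <-> s4o s = true.
Proof. unfold scal, Od, s4o; rewrite Z.eqb_eq; split;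
  [intros [t [[u ->] ->]]; Z.div_mod_to_equations; lia| intros; exists (s/4); split; [exists (s/8)|]; Z.div_mod_to_equations; lia]. Qed.

Definition b1 (a b c d : Z) := ob b && s2o c && s4e d.
Definition b2 (a b c d : Z) := ob b && s2o c && s4o d.
Definition b3 (a b c d : Z) := ob a && eb b && eb c && s2o d.
Definition b1' (a b c d : Z) := ob c && s2o b && s4e a.
Definition b1'' (a b c d : Z) := ob (b+c) && s2e (a+c) && s4e (a+b+c+d).
Definition b2' (a b c d : Z) := ob c && s2o b && s4o a.
Definition b2'' (a b c d : Z) := ob (b+c) && s2e (a+c) && s4o (a+b+c+d).
Definition b3' (a b c d : Z) := ob d && eb b && eb c && s2o a.
Definition b3'' (a b c d : Z) := ob a && ob b && ob c && ob d && s2o (a+b+c+d).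

Definition Pq a b c d := P (a,b,c,d).

Lemma Pa a b c d q : exists K, Pq (a+16*q) b c d = Pq a b c d + K*32.
Proof. exists (9*q*b*c*d - 2*q*c^3 - 27*a*q*d^2 - 216*q^2*d^2). unfold Pq, P. ring. Qed.
Lemma Pb a b c d q : exists K, Pq a (b+16*q) c d = Pq a b c d + K*32.
Proof. exists ((b*q+8*q^2)*c^2 + 9*a*q*c*d - (6*b^2*q+96*b*q^2+512*q^3)*d). unfold Pq, P. ring. Qed.
Lemma Pc a b c d q : exists K, Pq a b (c+16*q) d = Pq a b c d + K*32.
Proof. exists ((c*q+8*q^2)*b^2 + 9*d*q*b*a - (6*c^2*q+96*c*q^2+512*q^3)*a). unfold Pq, P. ring. Qed.
Lemma Pd a b c d q : exists K, Pq a b c (d+16*q) = Pq a b c d + K*32.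
Proof. exists (9*q*b*c*a - 2*q*b^3 - 27*d*q*a^2 - 216*q^2*a^2). unfold Pq, P. ring. Qed.

Lemma Pred a b c d : Pq a b c d mod 32 = Pq (a mod 16) (b mod 16) (c mod 16) (d mod 16) mod 32.
Proof.
  rewrite (Z.div_mod a 16) at 1 by lia. rewrite (Z.div_mod b 16) at 1 by lia.
  rewrite (Z.div_mod c 16) at 1 by lia. rewrite (Z.div_mod d 16) at 1 by lia.
  set (ra := a mod 16). set (rb := b mod 16). set (rc := c mod 16). set (rd := d mod 16).
  rewrite !(Z.add_comm (16 * _)).
  destruct (Pa ra (rb + 16*(b/16)) (rc+16*(c/16)) (rd+16*(d/16)) (a/16)) as [K1 ->].
  destruct (Pb ra rb (rc+16*(c/16)) (rd+16*(d/16)) (b/16)) as [K2 ->].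
  destruct (Pc ra rb rc (rd+16*(d/16)) (c/16)) as [K3 ->].
  destruct (Pd ra rb rc rd (d/16)) as [K4 ->].
  rewrite !Z.mod_add by lia. reflexivity.
Qed.

Definition L16 := map Z.of_nat (seq 0 16).
Lemma inL z : 0 <= z < 16 -> In z L16.
Proof. intros. unfold L16. replace z with (Z.of_nat (Z.to_nat z)) by lia.
  apply in_map. apply in_seq. lia. Qed.

Definition prop a b c d :=
  let p := Pq a b c d mod 32 in
  let x1 := b1 a b c d in let x1' := b1' a b c d in let x1'' := b1'' a b c d in
  let x2 := b2 a b c d in let x2' := b2' a b c d in let x2'' := b2'' a b c d in
  let x3 := b3 a b c d in let x3' := b3' a b c d in let x3'' := b3'' a b c d in
  Bool.eqb (p =? 4) (x1 || x1' || x1'') &&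
  negb (x1 && x1') && negb (x1 && x1'') && negb (x1' && x1'') &&
  Bool.eqb (p =? 20) (x2 || x2' || x2'' || x3 || x3' || x3'') &&
  forallb (fun pr => negb (fst pr && snd pr))
   [(x2,x2');(x2,x2'');(x2,x3);(x2,x3');(x2,x3'');(x2',x2'');(x2',x3);(x2',x3');(x2',x3'');
    (x2'',x3);(x2'',x3');(x2'',x3'');(x3,x3');(x3,x3'');(x3',x3'')].

Definition checkL L := forallb (fun a => forallb (fun b => forallb (fun c => forallb (fun d =>
  prop a b c d) L) L) L) L.

Lemma checkL_spec L : checkL L = true -> forall a b c d, In a L -> In b L -> In c L -> In d L ->
  prop a b c d = true.
Proof. unfold checkL. intros H a b c d Ha Hb Hc Hd.
  rewrite forallb_forall in H. specialize (H _ Ha).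
  rewrite forallb_forall in H. specialize (H _ Hb).
  rewrite forallb_forall in H. specialize (H _ Hc).
  rewrite forallb_forall in H. specialize (H _ Hd). exact H. Qed.

Lemma check_ok : checkL L16 = true.
Proof. vm_compute. reflexivity. Qed.

Ltac go := lazymatch goal with
 | |- andb _ _ = andb _ _ => f_equal; go
 | |- Z.eqb _ _ = Z.eqb _ _ => f_equal; Z.div_mod_to_equations; lia
 end.
Ltac inv_tac := unfold ob, eb, s2o, s2e, s4e, s4o; go.
Lemma ib1 a b c d : b1 a b c d = b1 (a mod 16) (b mod 16) (c mod 16) (d mod 16).
Proof. unfold b1. inv_tac. Qed.
Lemma ib1p a b c d : b1' a b c d = b1' (a mod 16) (b mod 16) (c mod 16) (d mod 16).
Proof. unfold b1'. inv_tac. Qed.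
Lemma ib1pp a b c d : b1'' a b c d = b1'' (a mod 16) (b mod 16) (c mod 16) (d mod 16).
Proof. unfold b1''. inv_tac. Qed.
Lemma ib2 a b c d : b2 a b c d = b2 (a mod 16) (b mod 16) (c mod 16) (d mod 16).
Proof. unfold b2. inv_tac. Qed.
Lemma ib2p a b c d : b2' a b c d = b2' (a mod 16) (b mod 16) (c mod 16) (d mod 16).
Proof. unfold b2'. inv_tac. Qed.
Lemma ib2pp a b c d : b2'' a b c d = b2'' (a mod 16) (b mod 16) (c mod 16) (d mod 16).
Proof. unfold b2''. inv_tac. Qed.
Lemma ib3 a b c d : b3 a b c d = b3 (a mod 16) (b mod 16) (c mod 16) (d mod 16).
Proof. unfold b3. inv_tac. Qed.
Lemma ib3p a b c d : b3' a b c d = b3' (a mod 16) (b mod 16) (c mod 16) (d mod 16).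
Proof. unfold b3'. inv_tac. Qed.
Lemma ib3pp a b c d : b3'' a b c d = b3'' (a mod 16) (b mod 16) (c mod 16) (d mod 16).
Proof. unfold b3''. inv_tac. Qed.

Lemma prop_all a b c d : prop a b c d = true.
Proof.
  unfold prop. rewrite Pred, ib1, ib1p, ib1pp, ib2, ib2p, ib2pp, ib3, ib3p, ib3pp.
  fold (prop (a mod 16) (b mod 16) (c mod 16) (d mod 16)).
  assert (B : forall z, In (z mod 16) L16) by (intro z; apply inL; apply Z.mod_pos_bound; lia).
  apply (checkL_spec _ check_ok); apply B.
Qed.

Ltac xb := unfold X1, X2, X3, X1', X2', X3', X1'', X2'', X3'', b1, b2, b3, b1', b2', b3', b1'', b2'', b3'';
  rewrite ?Od_b, ?Ev_b, ?s2o_b, ?s2e_b, ?s4e_b, ?s4o_b, ?andb_true_iff; tauto.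
Lemma x1 a b c d : X1 (a,b,c,d) <-> b1 a b c d = true. Proof. xb. Qed.
Lemma x2 a b c d : X2 (a,b,c,d) <-> b2 a b c d = true. Proof. xb. Qed.
Lemma x3 a b c d : X3 (a,b,c,d) <-> b3 a b c d = true. Proof. xb. Qed.
Lemma x1p a b c d : X1' (a,b,c,d) <-> b1' a b c d = true. Proof. xb. Qed.
Lemma x2p a b c d : X2' (a,b,c,d) <-> b2' a b c d = true. Proof. xb. Qed.
Lemma x3p a b c d : X3' (a,b,c,d) <-> b3' a b c d = true. Proof. xb. Qed.
Lemma x1pp a b c d : X1'' (a,b,c,d) <-> b1'' a b c d = true. Proof. xb. Qed.
Lemma x2pp a b c d : X2'' (a,b,c,d) <-> b2'' a b c d = true. Proof. xb. Qed.
Lemma x3pp a b c d : X3'' (a,b,c,d) <-> b3'' a b c d = true. Proof. xb. Qed.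

Ltac getp a b c d := pose proof (prop_all a b c d) as Hp; unfold prop in Hp; cbv zeta in Hp;
  cbn [forallb fst snd] in Hp;
  repeat match goal with H : (_ && _) = true |- _ => apply andb_true_iff in H; destruct H end.

Ltac pair_tac := intros [[[a b] c] d];
  rewrite ?x1, ?x2, ?x3, ?x1p, ?x2p, ?x3p, ?x1pp, ?x2pp, ?x3pp; intros [H1 H2];
  getp a b c d; rewrite H1, H2 in *;
  repeat match goal with H: negb (true && true) = true |- _ => discriminate H end.

Theorem lemma2p6 :
  disjoint_union (fun x => P x mod 32 = 4) [X1; X1'; X1''] /\
  disjoint_union (fun x => P x mod 32 = 20) [X2; X2'; X2''; X3; X3'; X3''].
Proof.
  split; split.
  - intros [[[a b] c] d]. getp a b c d.
    rewrite !Exists_cons, Exists_nil, x1, x1p, x1pp, <- Z.eqb_eq.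
    change (P (a,b,c,d)) with (Pq a b c d).
    match goal with H : Bool.eqb (_ =? 4) _ = true |- _ => apply Bool.eqb_prop in H; rewrite H end.
    rewrite !orb_true_iff. tauto.
  - repeat constructor; pair_tac.
  - intros [[[a b] c] d]. getp a b c d.
    rewrite !Exists_cons, Exists_nil, x2, x2p, x2pp, x3, x3p, x3pp, <- Z.eqb_eq.
    change (P (a,b,c,d)) with (Pq a b c d).
    match goal with H : Bool.eqb (_ =? 20) _ = true |- _ => apply Bool.eqb_prop in H; rewrite H end.
    rewrite !orb_true_iff. tauto.
  - repeat constructor; pair_tac.
Qed.
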